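(* Let $\mathcal{X}\subseteq\mathbb{R}^d$ be closed and convex, let $f:\mathcal{X}\to\mathbb{R}$ be convex and continuously differentiable with a minimizer $x^\ast\in\mathcal{X}$, and let $h:\mathcal{X}\to\mathbb{R}$ be strictly convex and continuously differentiable. Let $\alpha,\beta:\mathbb{R}\to\mathbb{R}$ be smooth, with $\beta$ nondecreasing and $\dot\beta_t\le e^{\alpha_t}$ for all $t$. Let $t\mapsto X_t\in\mathcal{X}$ be a differentiable curve such that $Z_t:=X_t+e^{-\alpha_t}\dot X_t\in\mathcal{X}$, $t\mapsto Z_t$ and $t\mapsto\nabla h(Z_t)$ are differentiable, and $$\frac{d}{dt}\nabla h(Z_t)=-e^{\alpha_t+\beta_t}\nabla f(X_t).$$ Then, for $x=x^\ast$, $$\frac{d}{dt}D_h(x,Z_t)\le-\frac{d}{dt}\Big\{e^{\beta_t}\big(f(X_t)-f(x)\big)\Big\};$$ if moreover $\dot\beta_t=e^{\alpha_t}$ for all $t$, this inequality holds for every $x\in\mathcal{X}$. Consequently $\mathcal{E}_t=D_h(x,Z_t)+e^{\beta_t}(f(X_t)-f(x))$ is nonincreasing in $t$ for $x=x^\ast$ (and for every $x\in\mathcal{X}$ when $\dot\beta_t=e^{\alpha_t}$).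
   Context: $D_h(y,x)=h(y)-h(x)-\langle\nabla h(x),y-x\rangle$ is the Bregman divergence of $h$; $\|\cdot\|$ is the Euclidean norm. *)

(* Defs.v *)
From HB Require Import structures.
From mathcomp Require Import all_boot all_order all_algebra.
From mathcomp Require Import all_classical all_reals all_analysis.
Set Implicit Arguments. Unset Strict Implicit. Unset Printing Implicit Defensive.
Import Order.TTheory GRing.Theory Num.Theory.
Import numFieldNormedType.Exports.
Local Open Scope classical_set_scope.
Local Open Scope ring_scope.

Section Defs.
Variables (R : realType) (d : nat).
Local Notation V := 'rV[R]_d.

Definition dotv (u v : V) : R := \sum_(i < d) u ord0 i * v ord0 i.

Definition gradient (f : V -> R) (x : V) : V :=
  \row_(i < d) ('d f x : V -> R) (delta_mx ord0 i).

Definition convex_on (X : set V) : Prop :=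
  forall x y (l : R), X x -> X y -> 0 <= l -> l <= 1 ->
    X (l *: x + (1 - l) *: y).

Definition convex_fun_on (X : set V) (f : V -> R) : Prop :=
  forall x y (l : R), X x -> X y -> 0 <= l -> l <= 1 ->
    f (l *: x + (1 - l) *: y) <= l * f x + (1 - l) * f y.

Definition strictly_convex_fun_on (X : set V) (f : V -> R) : Prop :=
  forall x y (l : R), X x -> X y -> x != y -> 0 < l -> l < 1 ->
    f (l *: x + (1 - l) *: y) < l * f x + (1 - l) * f y.

Definition C1_on (X : set V) (f : V -> R) : Prop :=
  (forall x, X x -> differentiable f x) /\ {within X, continuous (gradient f)}.

Definition bregman (h : V -> R) (y x : V) : R :=
  h y - h x - dotv (gradient h x) (y - x).

End Defs.

Definition smooth_fun (R : realType) (a : R -> R) : Prop :=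
  forall (n : nat) (t : R), derivable (derive1n n a) t 1.

(* Main.v *)
Require Import Defs.
From HB Require Import structures.
From mathcomp Require Import all_boot all_order all_algebra.
From mathcomp Require Import all_classical all_reals all_analysis.
From mathcomp Require Import ring lra.
Import Order.TTheory GRing.Theory Num.Theory.
Import numFieldNormedType.Exports.
Local Open Scope classical_set_scope.
Local Open Scope ring_scope.

Section Helpers.
Variables (R : realType) (d : nat).
Local Notation V := 'rV[R]_d.

Lemma isd_comp {U : normedModType R} (h : U -> R) (Z : R -> U) t :
  differentiable h (Z t) -> derivable Z t 1 ->
  is_derive t 1 (fun s => h (Z s)) ('d h (Z t) (derive1 Z t)).
Proof.
move=> dh /derivable1_diffP dZ.
have dc : differentiable (h \o Z) t := differentiable_comp dZ dh.
apply: DeriveDef; first exact: diff_derivable.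
change ('D_1 (h \o Z) t = 'd h (Z t) (derive1 Z t)).
by rewrite (deriveE _ dc) (diff_comp dZ dh) /= derive1E'.
Qed.

Lemma isd_comp1 (g F : R -> R) t :
  derivable F t 1 -> derivable g (F t) 1 ->
  is_derive t 1 (fun s => g (F s)) (derive1 g (F t) * derive1 F t).
Proof.
move=> dF dg; apply: DeriveDef.
  have := (derivable1_diffP _ _).1 dg; have := (derivable1_diffP _ _).1 dF.
  move=> a b; change (derivable (g \o F) t 1); apply: diff_derivable; exact: differentiable_comp.
by rewrite -[LHS]/('D_1 (g \o F) t) -derive1E derive1_comp.
Qed.

Lemma isd_coord {M : R -> V} {t : R} i : derivable M t 1 ->
  is_derive t 1 (fun s => M s ord0 i) (derive1 M t ord0 i).
Proof.
move=> dM; apply: DeriveDef; first exact: ((derivable_mxP _ _ _).1 dM ord0 i).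
by rewrite derive1E derive_mx // mxE.
Qed.

Lemma isdB {F G : R -> R} {t a b : R} : is_derive t 1 F a -> is_derive t 1 G b ->
  is_derive t 1 (fun s => F s - G s) (a - b).
Proof. move=> ? ?; exact: is_deriveB. Qed.

Lemma isdD {F G : R -> R} {t a b : R} : is_derive t 1 F a -> is_derive t 1 G b ->
  is_derive t 1 (fun s => F s + G s) (a + b).
Proof. move=> ? ?; exact: is_deriveD. Qed.

Lemma isdM {F G : R -> R} {t a b : R} : is_derive t 1 F a -> is_derive t 1 G b ->
  is_derive t 1 (fun s => F s * G s) (F t * b + G t * a).
Proof. move=> ? ?; exact: is_deriveM. Qed.

Lemma isd_dot (u w : R -> V) (t : R) : derivable u t 1 -> derivable w t 1 ->
  is_derive t 1 (fun s => dotv (u s) (w s))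
    (dotv (u t) (derive1 w t) + dotv (derive1 u t) (w t)).
Proof.
move=> du dw.
have H := @is_derive_sum _ _ _ d (fun i s => u s ord0 i * w s ord0 i) t 1
  (fun i => u t ord0 i * derive1 w t ord0 i + w t ord0 i * derive1 u t ord0 i)
  (fun i => isdM (isd_coord i du) (isd_coord i dw)).
rewrite fct_sumE in H.
apply: is_derive_eq.
rewrite /dotv -big_split /=; apply: eq_bigr => i _; by rewrite (mulrC (derive1 u t ord0 i)).
Qed.

Lemma diff_dot (h : V -> R) y v : 'd h y v = dotv (gradient h y) v.
Proof.
rewrite {1}(row_sum_delta v) linear_sum /dotv; apply: eq_bigr => i _.
by rewrite linearZ /= mxE mulrC.
Qed.

Lemma dotvN (u v : V) : dotv u (- v) = - dotv u v.
Proof. by rewrite /dotv -sumrN; apply: eq_bigr => i _; rewrite mxE mulrN. Qed.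
Lemma dotvNl (u v : V) : dotv (- u) v = - dotv u v.
Proof. by rewrite /dotv -sumrN; apply: eq_bigr => i _; rewrite mxE mulNr. Qed.
Lemma dotvZl (a : R) (u v : V) : dotv (a *: u) v = a * dotv u v.
Proof. by rewrite /dotv mulr_sumr; apply: eq_bigr => i _; rewrite mxE mulrA. Qed.
Lemma dotvZ (a : R) (u v : V) : dotv u (a *: v) = a * dotv u v.
Proof. by rewrite /dotv mulr_sumr; apply: eq_bigr => i _; rewrite mxE mulrCA. Qed.
Lemma dotvD (u v w : V) : dotv u (v + w) = dotv u v + dotv u w.
Proof. by rewrite /dotv -big_split; apply: eq_bigr => i _; rewrite mxE mulrDr. Qed.
Lemma dotvB (u v w : V) : dotv u (v - w) = dotv u v - dotv u w.
Proof. by rewrite dotvD dotvN. Qed.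

Lemma nonincr (F : R -> R) (s t : R) : (forall u, derivable F u 1) ->
  (forall u, derive1 F u <= 0) -> s <= t -> F t <= F s.
Proof.
move=> dF dF0 st.
have := @ler0_derive1_le_cc R F s t (fun u _ => dF u) (fun u _ => dF0 u).
move=> /(_ _ t s) H; apply: H => //.
- apply: derivable_within_continuous => u _; exact: dF.
- by rewrite in_itv /= lexx st.
- by rewrite in_itv /= lexx st.
Qed.

Lemma conv_grad (X : set V) (f : V -> R) x y : convex_fun_on X f ->
  X x -> X y -> differentiable f y -> 'd f y (x - y) <= f x - f y.
Proof.
move=> cf Xx Xy df.
have dv : derivable f y (x - y) by exact: diff_derivable.
have /cvg_ex[/= L HL] := dv.
rewrite -(deriveE _ df).
have -> : 'D_(x - y) f y = L by apply: cvg_lim.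
apply: (cvgr_to_le (F := at_right (0:R)) (f := fun h : R => h^-1 *: ((f \o shift y) (h *: (x - y)) - f y))); last first.
  near=> l.
  have l0 : 0 < l by near: l; exact: nbhs_right_gt.
  have l1 : l <= 1 by near: l; exact: nbhs_right_le.
  rewrite /= /shift /=.
  have -> : l *: (x - y) + y = l *: x + (1 - l) *: y.
    by rewrite scalerBr scalerBl scale1r -addrA [- _ + y]addrC.
  have := cf x y l Xx Xy (ltW l0) l1.
  move=> H.
  change (l^-1 * (f (l *: x + (1 - l) *: y) - f y) <= f x - f y).
  rewrite ler_pdivrMl //.
  have -> : l * (f x - f y) = l * f x + (1 - l) * f y - f y by ring.
  by rewrite lerB.
move=> A /HL /nbhs_ballP [_ /posnumP[e] xe_A].
by exists e%:num => //= z xe_z /gt_eqF/negbT/xe_A; exact.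
Unshelve. all: by end_near.
Qed.

Lemma derive1_val {W : normedModType R} (F : R -> W) (t : R) df :
  is_derive t 1 F df -> derive1 F t = df.
Proof. by move=> H; rewrite derive1E derive_val. Qed.

Lemma isdBv (w : V) (F : R -> V) (t : R) : derivable F t 1 ->
  is_derive t 1 (fun s => w - F s) (- derive1 F t).
Proof.
move=> dF.
have isdF : is_derive t 1 F (derive1 F t) by rewrite derive1E; exact: derivableP.
have H := @is_deriveB _ _ _ (cst w) F t 1 0 (derive1 F t) _ isdF.
rewrite sub0r in H; exact: H.
Qed.

Lemma isd_compV (h : V -> R) (Z : R -> V) (t : R) :
  differentiable h (Z t) -> derivable Z t 1 ->
  is_derive t 1 (fun s => h (Z s)) (dotv (gradient h (Z t)) (derive1 Z t)).
Proof.
move=> dh dZ.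
have H := isd_comp h Z t dh dZ.
rewrite -diff_dot.
exact H.
Qed.
Lemma isd_bregman (h : V -> R) (Z : R -> V) (x : V) (t : R) :
  differentiable h (Z t) -> derivable Z t 1 -> derivable (gradient h \o Z) t 1 ->
  is_derive t 1 (fun s => bregman h x (Z s))
    (- dotv (derive1 (gradient h \o Z) t) (x - Z t)).
Proof.
move=> dh dZ dg.
have e1 : derive1 (fun s => x - Z s) t = - derive1 Z t.
  by apply: derive1_val; apply: isdBv.
have dxZ : derivable (fun s => x - Z s) t 1.
  by have := isdBv x Z t dZ; case.
have HD := isdB (isdB (is_derive_cst (h x) t 1) (isd_compV h Z t dh dZ))
      (isd_dot _ _ t dg dxZ).
rewrite /cst e1 in HD.
apply: is_derive_eq.
rewrite dotvN /=; ring.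
Qed.

Lemma isd_G (f : V -> R) (Xc : R -> V) (beta : R -> R) (x : V) (t : R) :
  differentiable f (Xc t) -> derivable Xc t 1 -> derivable beta t 1 ->
  is_derive t 1 (fun s => expR (beta s) * (f (Xc s) - f x))
    (expR (beta t) * dotv (gradient f (Xc t)) (derive1 Xc t) +
     (f (Xc t) - f x) * (expR (beta t) * derive1 beta t)).
Proof.
move=> df dXc db.
have Hexp : is_derive t 1 (fun s => expR (beta s)) (expR (beta t) * derive1 beta t).
  have dexp : derivable expR (beta t) 1.
    by have [] := is_derive_expR (beta t).
  have H1 := isd_comp1 _ _ t db dexp.
  by rewrite (derive1_val _ _ _ (is_derive_expR _)) in H1.
have HG := isdM Hexp (isdB (isd_compV f Xc t df dXc) (is_derive_cst (f x) t 1)).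
rewrite /cst in HG.
apply: is_derive_eq.
rewrite subr0 //.
Qed.

Lemma key_ineq (X : set V) (f h : V -> R) (Z Xc : R -> V) (alpha beta : R -> R)
  (x : V) (t : R) :
  convex_fun_on X f -> X x -> X (Xc t) -> differentiable f (Xc t) ->
  differentiable h (Z t) ->
  derivable Z t 1 -> derivable Xc t 1 -> derivable (gradient h \o Z) t 1 ->
  derivable beta t 1 ->
  Z t = Xc t + expR (- alpha t) *: derive1 Xc t ->
  derive1 (gradient h \o Z) t = - (expR (alpha t + beta t) *: gradient f (Xc t)) ->
  (derive1 beta t - expR (alpha t)) * (f (Xc t) - f x) <= 0 ->
  exists dD dG : R, is_derive t 1 (fun s => bregman h x (Z s)) dD /\
    is_derive t 1 (fun s => expR (beta s) * (f (Xc s) - f x)) dG /\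
    dD + dG <= 0.
Proof.
move=> cf Xx XXc df dh dZ dXc dg db eZ hg hs.
exists (- dotv (derive1 (gradient h \o Z) t) (x - Z t)).
exists (expR (beta t) * dotv (gradient f (Xc t)) (derive1 Xc t) +
     (f (Xc t) - f x) * (expR (beta t) * derive1 beta t)).
split; first exact: isd_bregman.
split; first exact: isd_G.
rewrite hg eZ dotvNl opprK dotvZl.
have -> : x - (Xc t + expR (- alpha t) *: derive1 Xc t) =
  (x - Xc t) - expR (- alpha t) *: derive1 Xc t by rewrite opprD addrA.
rewrite dotvB dotvZ expRD expRN.
have cg := conv_grad X f x (Xc t) cf Xx XXc df.
rewrite diff_dot in cg.
have A0 : 0 < expR (alpha t) := expR_gt0 _.
have B0 : 0 < expR (beta t) := expR_gt0 _.
have AV : expR (alpha t) * (expR (alpha t))^-1 = 1 by rewrite mulfV // gt_eqF.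
have h1 : expR (alpha t) * dotv (gradient f (Xc t)) (x - Xc t)
   + (f (Xc t) - f x) * derive1 beta t <= 0 by nra.
have -> : expR (alpha t) * expR (beta t) * (dotv (gradient f (Xc t)) (x - Xc t) -
    (expR (alpha t))^-1 * dotv (gradient f (Xc t)) (derive1 Xc t)) +
  (expR (beta t) * dotv (gradient f (Xc t)) (derive1 Xc t) +
   (f (Xc t) - f x) * (expR (beta t) * derive1 beta t)) =
  expR (beta t) * (expR (alpha t) * dotv (gradient f (Xc t)) (x - Xc t)
   + (f (Xc t) - f x) * derive1 beta t) +
  expR (beta t) * dotv (gradient f (Xc t)) (derive1 Xc t) * (1 - expR (alpha t) * (expR (alpha t))^-1).
  by ring.
by rewrite AV subrr mulr0 addr0 pmulr_rle0.
Qed.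
End Helpers.
Arguments key_ineq {R d}. Arguments nonincr {R}. Arguments derive1_val {R W F t df}.
Arguments isdD {R F G t a b}.

Theorem proposition2 (R : realType) (d : nat) (X : set 'rV[R]_d)
  (f h : 'rV[R]_d -> R) (xstar : 'rV[R]_d) (alpha beta : R -> R)
  (Xc : R -> 'rV[R]_d) :
  closed X -> convex_on X ->
  convex_fun_on X f -> C1_on X f ->
  X xstar -> (forall y, X y -> f xstar <= f y) ->
  strictly_convex_fun_on X h -> C1_on X h ->
  smooth_fun alpha -> smooth_fun beta ->
  (forall s t, s <= t -> beta s <= beta t) ->
  (forall t, derive1 beta t <= expR (alpha t)) ->
  (forall t, X (Xc t)) -> (forall t, derivable Xc t 1) ->
  let Z := fun t => Xc t + expR (- alpha t) *: derive1 Xc t in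
  (forall t, X (Z t)) -> (forall t, derivable Z t 1) ->
  (forall t, derivable (gradient h \o Z) t 1) ->
  (forall t, derive1 (gradient h \o Z) t
             = - (expR (alpha t + beta t) *: gradient f (Xc t))) ->
  let D := fun x t => bregman h x (Z t) in
  let G := fun x t => expR (beta t) * (f (Xc t) - f x) in
  let E := fun x t => D x t + G x t in
  let conclusion := fun x =>
    (forall t, derivable (D x) t 1 /\ derivable (G x) t 1 /\
               derive1 (D x) t <= - derive1 (G x) t) /\
    (forall s t, s <= t -> E x t <= E x s) in
  conclusion xstar /\
  ((forall t, derive1 beta t = expR (alpha t)) ->
   forall x, X x -> conclusion x).
Proof.
move=> clX convX cf C1f Xxs minf sch C1h sa sb bmon bd XXc dXc Z XZ dZ dgZ hgrad
  D G E conclusion.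
have db : forall t, derivable beta t 1 by move=> t; exact: (sb 0%N t).
have claim : forall x, X x ->
  (forall t, (derive1 beta t - expR (alpha t)) * (f (Xc t) - f x) <= 0) ->
  conclusion x.
  move=> x Xx Hsign.
  have key : forall t : R, exists dDv dGv : R, is_derive t 1 (D x) dDv /\
      is_derive t 1 (G x) dGv /\ dDv + dGv <= 0.
    move=> t.
    have dh : differentiable h (Z t) by exact: C1h.1.
    have df : differentiable f (Xc t) by exact: C1f.1.
    exact: (key_ineq X f h Z Xc alpha beta x t cf Xx (XXc t) df dh (dZ t) (dXc t)
      (dgZ t) (db t) erefl (hgrad t) (Hsign t)).
  split.
    move=> t; have [dD [dG [HD [HG le]]]] := key t.
    split; first by case: HD.
    split; first by case: HG.
    rewrite (derive1_val HD) (derive1_val HG); lra.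
  move=> s t st; apply: nonincr => // u.
    have [dD [dG [HD [HG le]]]] := key u.
    by have [] := isdD HD HG.
  have [dD [dG [HD [HG le]]]] := key u.
  by rewrite (derive1_val (isdD HD HG)).
split; last first.
  move=> beq x Xx; apply: claim => // t; by rewrite beq subrr mul0r.
apply: claim => // t.
by apply: mulr_le0_ge0; rewrite ?subr_le0 ?subr_ge0 ?bd ?minf.
Qed.
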